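(* If a subshift $X$ has infinitely many significant blocks, then for every $n\in\mathbb N$, $n\ge1$, there exists a significant block of $X$ of length $n$.
   Context: Let $\mathcal A$ be a finite alphabet and $\sigma$ the shift, $(\sigma x)_i=x_{i+1}$. For a one-sided subshift $X^+\subseteq\mathcal A^{\mathbb N}$ (nonempty, closed, $\sigma$-invariant), the natural extension is $\tilde X=\{x\in\mathcal A^{\mathbb Z}: x_px_{p+1}\dots\in X^+\ \forall p\in\mathbb Z\}$; for a two-sided subshift $X$, $X^+$ is the set of right rays of its points and $\tilde X=X$. For a block $a_{-n}\dots a_0$ occurring in $\tilde X$, $\mathrm{fol}(a_{-n}\dots a_0)=\{b_0b_1\dots\in X^+:\exists b\in\tilde X,\ b_{-n}\dots b_0=a_{-n}\dots a_0\}$. A block $a_{-n}\dots a_0$ occurring in $\tilde X$ with $n\ge1$ is a significant block of $X$ if $\mathrm{fol}(a_{-n}\dots a_0)\subsetneq\mathrm{fol}(a_{-n+1}\dots a_0)$; single symbols occurring in $\tilde X$ are also counted as significant. *)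

(* Defs.v *)
From mathcomp Require Import all_boot all_algebra.
Set Implicit Arguments. Unset Strict Implicit. Unset Printing Implicit Defensive.
Import GRing.Theory Num.Theory.
Local Open Scope ring_scope.

Section Subshifts.
Variable A : finType.

Definition shift2 (x : int -> A) : int -> A := fun i => x (i + 1).
Definition unshift2 (x : int -> A) : int -> A := fun i => x (i - 1).
Definition shift1 (x : nat -> A) : nat -> A := fun i => x i.+1.

(* closedness in the product topology (A discrete): a point all of whose
   finite windows agree with points of X lies in X *)
Definition closed2 (X : (int -> A) -> Prop) : Prop :=
  forall x, (forall N : nat, exists y, X y /\
              forall i : int, `|i|%N <= N -> y i = x i)%N -> X x.
Definition closed1 (X : (nat -> A) -> Prop) : Prop :=
  forall x, (forall N : nat, exists y, X y /\
              forall i : nat, (i <= N)%N -> y i = x i) -> X x.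

Definition subshift2 (X : (int -> A) -> Prop) : Prop :=
  [/\ exists x, X x, closed2 X,
      (forall x, X x -> X (shift2 x)) & (forall x, X x -> X (unshift2 x))].

Definition subshift1 (X : (nat -> A) -> Prop) : Prop :=
  [/\ exists x, X x, closed1 X & (forall x, X x -> X (shift1 x))].

Definition natext (Xp : (nat -> A) -> Prop) : (int -> A) -> Prop :=
  fun x => forall p : int, Xp (fun i : nat => x (p + i%:Z)).

Definition rays (Xt : (int -> A) -> Prop) : (nat -> A) -> Prop :=
  fun c => exists x, Xt x /\ forall i : nat, c i = x i%:Z.

(* The data (X^+, X~) attached to a subshift X, one- or two-sided. *)
Definition subshift_pair (Xp : (nat -> A) -> Prop) (Xt : (int -> A) -> Prop) :=
  (subshift2 Xt /\ Xp = rays Xt) \/ (subshift1 Xp /\ Xt = natext Xp).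

(* A block w = a_{-n} ... a_0 (size w = n+1, w`_k = a_{k-n}) sits in b at
   coordinates -n..0 *)
Definition block_at0 (b : int -> A) (w : seq A) : Prop :=
  forall k : nat, (k < size w)%N -> forall a0 : A,
    b (k%:Z - (size w).-1%:Z) = nth a0 w k.

Definition occurs_in (Xt : (int -> A) -> Prop) (w : seq A) : Prop :=
  exists b, Xt b /\ exists p : int, forall k : nat, (k < size w)%N ->
    forall a0 : A, b (p + k%:Z) = nth a0 w k.

Definition fol (Xp : (nat -> A) -> Prop) (Xt : (int -> A) -> Prop) (w : seq A)
  : (nat -> A) -> Prop :=
  fun c => Xp c /\ exists b, Xt b /\ block_at0 b w /\ forall i : nat, c i = b i%:Z.

Definition strict_subset (T : Type) (P Q : T -> Prop) : Prop :=
  (forall t, P t -> Q t) /\ exists t, Q t /\ ~ P t.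

(* significant blocks (single symbols occurring in X~ count as significant) *)
Definition significant (Xp : (nat -> A) -> Prop) (Xt : (int -> A) -> Prop)
  (w : seq A) : Prop :=
  occurs_in Xt w /\
  (size w = 1%N \/
   ((2 <= size w)%N /\ strict_subset (fol Xp Xt w) (fol Xp Xt (behead w)))).

End Subshifts.

(* Main.v *)
Set Warnings "-notation-overridden,-ambiguous-paths".
Require Import Defs.
From mathcomp Require Import all_boot all_algebra zify.
From Stdlib Require Import Classical FunctionalExtensionality.
Import GRing.Theory.
Local Open Scope ring_scope.

Section S.
Variable A : finType.
Variables (Xp : (nat -> A) -> Prop) (Xt : (int -> A) -> Prop).
Hypothesis sp : subshift_pair Xp Xt.

Lemma Xt_shift x : Xt x -> Xt (shift2 x).
Proof.
case: sp => [[[_ _ H _] _]|[_ ->]]; first exact: H.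
move=> Hx p. have -> : (fun i : nat => shift2 x (p + i%:Z)) =
  (fun i : nat => x ((p + 1) + i%:Z)).
  by apply: functional_extensionality => i; rewrite /shift2 addrAC.
exact: Hx.
Qed.

Lemma Xt_unshift x : Xt x -> Xt (unshift2 x).
Proof.
case: sp => [[[_ _ _ H] _]|[_ ->]]; first exact: H.
move=> Hx p. have -> : (fun i : nat => unshift2 x (p + i%:Z)) =
  (fun i : nat => x ((p - 1) + i%:Z)).
  by apply: functional_extensionality => i; rewrite /unshift2 addrAC.
exact: Hx.
Qed.

Lemma Xt_ray x : Xt x -> Xp (fun i : nat => x i%:Z).
Proof.
case: sp => [[_ ->]|[_ ->]]; first by move=> Hx; exists x.
move=> Hx; have := Hx 0.
have -> : (fun i : nat => x (0 + i%:Z)) = (fun i : nat => x i%:Z) by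
  apply: functional_extensionality => i; rewrite add0r.
by [].
Qed.

Lemma block_behead (b : int -> A) (w : seq A) : block_at0 b w -> block_at0 b (behead w).
Proof.
case: w => [|x w] //= H k Hk a0.
have := H k.+1 Hk a0; rewrite /= => <-; congr b; lia.
Qed.

Lemma fol_behead (w : seq A) c : fol Xp Xt w c -> fol Xp Xt (behead w) c.
Proof.
by case=> Hc [b [Hb [Hbl Hr]]]; split=> //; exists b; split=> //; split=> //;
  apply: block_behead.
Qed.

Lemma fol_rcons (u' u : seq A) (a : A) :
  (forall c, fol Xp Xt u' c -> fol Xp Xt u c) ->
  forall c, fol Xp Xt (rcons u' a) c -> fol Xp Xt (rcons u a) c.
Proof.
move=> H c [Hc [b [Hb [Hbl Hr]]]]; split=> //.
have Hb0 : b 0 = a.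
  have := Hbl (size u') _ a; rewrite size_rcons nth_rcons ltnn eqxx.
  move=> <-; [congr b; lia | by []].
set b' := unshift2 b.
have Hd : fol Xp Xt u' (fun i : nat => b' i%:Z).
  split; first by apply: Xt_ray; apply: Xt_unshift.
  exists b'; split; first by apply: Xt_unshift.
  split=> // k Hk a0.
  have := Hbl k _ a0; rewrite size_rcons nth_rcons Hk => <-; last by lia.
  rewrite /b' /unshift2; congr b; lia.
case: (H _ Hd) => _ [b2 [Hb2 [Hbl2 Hr2]]].
exists (shift2 b2); split; first exact: Xt_shift.
split.
  move=> k; rewrite size_rcons ltnS leq_eqVlt => /orP [/eqP ->|Hk] a0.
    rewrite nth_rcons ltnn eqxx /shift2.
    have -> : (size u)%:Z - (size u).+1.-1%:Z + 1 = 1%:Z by lia.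
    by rewrite -Hr2 /b' /unshift2 -Hb0; congr b; lia.
  rewrite nth_rcons Hk -(Hbl2 k Hk a0) /shift2; congr b2; lia.
move=> i; rewrite Hr /shift2.
have -> : i%:Z + 1 = (i.+1)%:Z by lia.
by rewrite -Hr2 /b' /unshift2; congr b; lia.
Qed.

Lemma sig_prefix (v : seq A) (a : A) : significant Xp Xt (rcons v a) -> (1 <= size v)%N ->
  significant Xp Xt v.
Proof.
move=> [[b [Hb [p Hp]]] Hs] Hv; split.
  exists b; split=> //; exists p => k Hk a0.
  by rewrite (Hp k _ a0) ?nth_rcons ?Hk // size_rcons; lia.
case: (ltngtP (size v) 1) => Hsz; [lia | | by left].
right; split=> //; split; first exact: fol_behead.
apply: NNPP => Hn.
have Hsub : forall c, fol Xp Xt (behead v) c -> fol Xp Xt v c.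
  move=> c Hc; apply: NNPP => Hc'; apply: Hn; by exists c.
case: Hs => [|[_ [_ [c [Hc Hnc]]]]]; first by rewrite size_rcons; lia.
apply: Hnc; move: Hc.
case: v Hsz Hsub {Hb Hp Hn Hv} => [|x v] //= _ Hsub.
exact: (@fol_rcons v (x :: v) a Hsub c).
Qed.

End S.

Fixpoint allseqs (A : finType) (k : nat) : seq (seq A) :=
  if k is k'.+1 then [::] :: [seq x :: s | x <- enum A, s <- allseqs A k']
  else [:: [::]].

Lemma allseqsP (A : finType) k (w : seq A) : (size w <= k)%N -> w \in allseqs A k.
Proof.
elim: k w => [|k IH] [|x w] //=; rewrite ?inE ?eqxx //.
move=> Hs; apply/orP; right; apply/allpairsP; exists (x, w); split=> //.
  by rewrite mem_enum.
exact: IH.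
Qed.

Theorem proposition3p10 (A : finType) (Xp : (nat -> A) -> Prop)
  (Xt : (int -> A) -> Prop) :
  subshift_pair Xp Xt ->
  ~ (exists s : seq (seq A), forall w, significant Xp Xt w -> w \in s) ->
  forall n : nat, (1 <= n)%N ->
  exists w : seq A, size w = n /\ significant Xp Xt w.
Proof.
move=> sp Hinf n Hn.
have [w [Hw Hsw]] : exists w, significant Xp Xt w /\ (n <= size w)%N.
  apply: NNPP => H; apply: Hinf; exists (allseqs A n) => w Hw.
  apply: allseqsP; apply: ltnW; rewrite ltnNge; apply/negP => Hle.
  by apply: H; exists w.
have : forall d w, significant Xp Xt w -> size w = (n + d)%N ->
    exists w', size w' = n /\ significant Xp Xt w'.
  elim=> [|d IH] w' Hw'; first by rewrite addn0 => <-; exists w'.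
  case/lastP: w' Hw' => [|v a] Hw'; first by rewrite /= ; lia.
  rewrite size_rcons => Hs; apply: (IH v); last by lia.
  by apply: (@sig_prefix A Xp Xt sp v a Hw'); lia.
by move/(_ (size w - n)%N w Hw); apply; lia.
Qed.
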